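(* Fix $0<\alpha<1$ and $f\in C^\alpha(\Omega)$. Then for every $\varphi\in C(\Omega)$, $$\lim_{n\to\infty}\left\|\frac1n\,\frac{\mathscr{L}_f^n(S_n\varphi)}{\mathscr{L}_f^n\mathbf{1}}-\int_\Omega\varphi\,h_f\,d\nu_f\right\|_0=0.$$
   Context: Let $(M,d)$ be a compact metric space and $\mu$ a Borel probability measure on $M$ with full support. $\Omega=M^{\mathbb{N}}$ with metric $d_\Omega(x,y)=\sum_{n\ge1}2^{-n}d(x_n,y_n)$, $\sigma$ the left shift, $C(\Omega)$ the continuous functions with sup norm $\|\cdot\|_0$, $C^\alpha(\Omega)$ the $\alpha$-Hölder functions. The Ruelle operator is $\mathscr{L}_f\varphi(x)=\int_M e^{f(ax)}\varphi(ax)\,d\mu(a)$ with $ax=(a,x_1,x_2,\dots)$; $\mathbf 1$ is the constant function $1$; $S_n\varphi=\sum_{j=0}^{n-1}\varphi\circ\sigma^j$. For $f\in C^\alpha(\Omega)$, $\lambda_f>0$, $h_f>0$ and $\nu_f$ are the maximal eigenvalue, eigenfunction and eigenmeasure from the Ruelle–Perron–Frobenius theorem: $\mathscr{L}_fh_f=\lambda_fh_f$, $\mathscr{L}_f^*\nu_f=\lambda_f\nu_f$, $\nu_f$ a probability measure, $\int h_f d\nu_f=1$, and $\|\lambda_f^{-n}\mathscr{L}_f^n\varphi-h_f\int\varphi\,d\nu_f\|_0\to0$ for all $\varphi\in C(\Omega)$. *)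

(* Defs.v *)
From HB Require Import structures.
From mathcomp Require Import all_boot all_order all_algebra.
From mathcomp Require Import all_classical all_reals all_analysis.
Set Implicit Arguments. Unset Strict Implicit. Unset Printing Implicit Defensive.
Import Order.TTheory GRing.Theory Num.Theory.
Import numFieldNormedType.Exports.
Local Open Scope classical_set_scope.
Local Open Scope ring_scope.

Section Defs.
Variable R : realType.

Definition is_metric {M : Type} (d : M -> M -> R) : Prop :=
  [/\ forall x y, 0 <= d x y,
      forall x y, d x y = 0 <-> x = y,
      forall x y, d x y = d y x &
      forall x y z, d x z <= d x y + d y z].

Definition d_open {T : Type} (d : T -> T -> R) : set (set T) :=
  [set U | forall x, U x -> exists2 e : R, 0 < e & forall y, d x y < e -> U y].

Definition d_compact {M : Type} (d : M -> M -> R) : Prop :=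
  forall u : nat -> M, exists (phi : nat -> nat) (l : M),
    (forall n, (phi n < phi n.+1)%N) /\
    (fun n => d (u (phi n)) l) @ \oo --> (0 : R).

(* Omega = M^N, with x_1 stored at index 0 *)
Definition dOmega {M : Type} (d : M -> M -> R) (x y : nat -> M) : R :=
  limn (fun n => \sum_(k < n) (2^-1) ^+ k.+1 * d (x k) (y k)).

Definition shift {M : Type} (x : nat -> M) : nat -> M := fun n => x n.+1.

Definition scons {M : Type} (a : M) (x : nat -> M) : nat -> M :=
  fun n => if n is k.+1 then x k else a.

Definition d_continuous {T : Type} (dT : T -> T -> R) (g : T -> R) : Prop :=
  forall x (e : R), 0 < e -> exists2 delta : R, 0 < delta &
    forall y, dT x y < delta -> `|g x - g y| < e.

Definition d_holder {T : Type} (dT : T -> T -> R) (alpha : R) (g : T -> R) : Prop :=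
  exists C : R, forall x y, `|g x - g y| <= C * (dT x y) `^ alpha.

Definition supnorm {T : Type} (g : T -> R) : R := sup [set `|g x| | x in [set: T]].

Definition Birkhoff {M : Type} (n : nat) (phi : (nat -> M) -> R) (x : nat -> M) : R :=
  \sum_(j < n) phi (iter j shift x).

End Defs.

Definition BorelM {R : realType} {M : pointedType} (d : M -> M -> R) :=
  g_sigma_algebraType (d_open d).
Definition BorelOmega {R : realType} {M : pointedType} (d : M -> M -> R) :=
  g_sigma_algebraType (d_open (dOmega d)).

Definition Ruelle {R : realType} {M : pointedType} (d : M -> M -> R)
  (mu : probability (BorelM d) R) (f phi : (nat -> M) -> R) (x : nat -> M) : R :=
  fine (\int[mu]_(a in [set: BorelM d]) (expR (f (scons a x)) * phi (scons a x))%:E)%E.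

(* Main.v *)
Require Import Defs.
From HB Require Import structures.
From mathcomp Require Import all_boot all_order all_algebra.
From mathcomp Require Import all_classical all_reals all_analysis.
From mathcomp Require Import ring lra.
Import Order.TTheory GRing.Theory Num.Theory.
Import numFieldNormedType.Exports.
Local Open Scope classical_set_scope.
Local Open Scope ring_scope.
Section Aux.
Context {R : realType}.

Lemma cvg_epsN (u : nat -> R) l : u @ \oo --> l <->
  forall e : R, 0 < e -> exists N, forall n, (N <= n)%N -> `|u n - l| < e.
Proof.
split.
  move/cvgrPdist_lt => H e e0; have [N _ HN] := H e e0.
  by exists N => n Nn; rewrite distrC; exact: HN.
move=> H; apply/cvgrPdist_lt => e e0; have [N HN] := H e e0.
by exists N => // n /= Nn; rewrite distrC; exact: HN.
Qed.

Lemma incr_ge (phi : nat -> nat) : (forall n, (phi n < phi n.+1)%N) ->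
  forall n, (n <= phi n)%N.
Proof.
move=> H; elim=> [|n IH] //; exact: leq_ltn_trans IH (H n).
Qed.

Lemma incr_mono (phi : nat -> nat) : (forall n, (phi n < phi n.+1)%N) ->
  forall m n, (m < n)%N -> (phi m < phi n)%N.
Proof.
move=> H m; elim=> [|n IH] //; rewrite ltnS leq_eqVlt => /orP[/eqP->//|/IH].
by move=> h; exact: ltn_trans h (H n).
Qed.

Lemma geo_small (c e : R) : 0 < e -> exists N, c * (2^-1) ^+ N < e.
Proof.
move=> e0.
have : (fun n => (2^-1 : R) ^+ n) @ \oo --> 0.
  apply: cvg_expr; rewrite ger0_norm ?invr_ge0 ?ler0n//.
  by rewrite invf_lt1 ?ltr0n// ltr1n.
move/cvg_epsN => /(_ (e / (`|c| + 1))).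
have cpos : 0 < `|c| + 1 by rewrite ltr_pwDr.
case; first by rewrite divr_gt0.
move=> N HN; exists N; have := HN N (leqnn _); rewrite subr0.
rewrite ger0_norm ?exprn_ge0 ?invr_ge0 ?ler0n// => H.
apply: (le_lt_trans (ler_norm _)); rewrite normrM.
rewrite (ger0_norm (exprn_ge0 _ _)) ?invr_ge0 ?ler0n//.
apply: (le_lt_trans (y := (`|c| + 1) * (2^-1) ^+ N)).
  by rewrite ler_wpM2r ?exprn_ge0 ?invr_ge0 ?ler0n// lerDl.
by rewrite mulrC -ltr_pdivlMr.
Qed.

Lemma approx_le (x y c : R) : (forall N, x <= y + c * (2^-1) ^+ N) -> x <= y.
Proof.
move=> H; rewrite leNgt; apply/negP => yx.
have hxy : 0 < x - y by rewrite subr_gt0.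
have [N HN] := @geo_small c (x - y) hxy.
have := H N; lra.
Qed.

Lemma approx_eq (x y c : R) : (forall N, `|x - y| <= c * (2^-1) ^+ N) -> x = y.
Proof.
move=> H; apply/eqP; rewrite eq_le; apply/andP; split.
  apply: (@approx_le _ _ c) => N; rewrite -lerBlDl.
  exact: le_trans (ler_norm _) (H N).
apply: (@approx_le _ _ c) => N; rewrite -lerBlDl.
by rewrite -normrN opprB in H; exact: le_trans (ler_norm _) (H N).
Qed.

End Aux.
From Stdlib Require Import Classical.

Section Metric.
Variables (R : realType) (M : pointedType) (d : M -> M -> R).
Hypothesis dm : is_metric d.
Hypothesis dc : d_compact d.

Lemma d_ge0 x y : 0 <= d x y. Proof. by case: dm. Qed.
Lemma d_sym x y : d x y = d y x. Proof. by case: dm. Qed.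
Lemma d_tri x y z : d x z <= d x y + d y z. Proof. by case: dm. Qed.
Lemma d_xx x : d x x = 0. Proof. by case: dm => _ H _ _; apply/H. Qed.

Lemma d_bnd : exists B, 0 <= B /\ forall a b, d a b <= B.
Proof.
pose p := (point : M).
suff [B HB] : exists B, forall a, d p a <= B.
  exists (B + B); split; first by have := HB p; have := d_ge0 p p; lra.
  move=> a b; have := d_tri a p b; have := HB a; have := HB b; have := d_sym a p; lra.
apply: NNPP => nB.
have H : forall n : nat, exists a, n%:R < d p a.
  move=> n; apply: NNPP => hn; apply: nB; exists n%:R => a.
  rewrite leNgt; apply/negP => h; apply: hn; by exists a.
have [u Hu] := choice H.
have [phi [l [phiI cv]]] := dc u.
move/cvg_epsN: cv => /(_ 1 ltr01) [N HN].
have dpl0 : 0 <= d p l + 1 by have := d_ge0 p l; lra.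
pose K := Num.Def.archi_bound (d p l + 1).
pose n := maxn N K.
have h1 := HN n (leq_maxl _ _).
have h2 := Hu (phi n).
have h3 := d_tri p l (u (phi n)).
have h4 : (K <= phi n)%N.
  by apply: (leq_trans (leq_maxr N K)); exact: incr_ge.
have h5 := archi_boundP dpl0.
have h6 : (K%:R : R) <= (phi n)%:R by rewrite ler_nat.
move: h1; rewrite subr0 ger0_norm ?d_ge0// d_sym => h1.
rewrite -/K in h5; lra.
Qed.

End Metric.
Arguments d_ge0 {R M d}.
Arguments d_sym {R M d}.
Arguments d_tri {R M d}.
Arguments d_xx {R M d}.
Arguments d_bnd {R M d}.
Section Omega.
Context {R : realType} {M : pointedType} {d : M -> M -> R}.
Hypothesis dm : is_metric d.
Context {B : R}.
Hypothesis B0 : 0 <= B.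
Hypothesis dB : forall a b, d a b <= B.

Local Notation q := ((2:R)^-1).
Definition WS N (t : nat -> R) := \sum_(k < N) q ^+ k.+1 * t k.

Lemma q_ge0 : 0 <= q. Proof. by rewrite invr_ge0 ler0n. Qed.
Lemma qn_ge0 n : 0 <= q ^+ n. Proof. exact/exprn_ge0/q_ge0. Qed.

Lemma WS_bnd t c : (forall k, 0 <= t k <= c) ->
  forall N, 0 <= WS N t <= c - c * q ^+ N.
Proof.
move=> ht; elim=> [|N IH]; first by rewrite /WS big_ord0 expr0 mulr1 subrr lexx.
rewrite /WS big_ord_recr /= -/(WS N t).
have [t0 tc] := andP (ht N).
have e : q ^+ N.+1 = q ^+ N / 2 by rewrite exprS mulrC.
rewrite e; move: IH; set Q := q ^+ N => /andP[a b].
have Q0 : 0 <= Q by exact: qn_ge0.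
have h1 : Q * t N <= Q * c by rewrite ler_wpM2l.
have h0 : 0 <= Q * t N by rewrite mulr_ge0.
apply/andP; split; nra.
Qed.

Lemma WS_split N m t :
  WS (N + m) t = WS N t + q ^+ N * WS m (fun k => t (N + k)%N).
Proof.
rewrite /WS big_split_ord /=; congr (_ + _); rewrite big_distrr /=.
by apply: eq_bigr => i _; rewrite -addnS exprD mulrA.
Qed.

Lemma WS_cons N t : WS N.+1 t = q * t 0%N + q * WS N (fun k => t k.+1).
Proof.
rewrite /WS big_ord_recl /= expr1; congr (_ + _); rewrite big_distrr /=.
by apply: eq_bigr => i _; rewrite exprS mulrA.
Qed.

Lemma WS_le N t1 t2 : (forall k, t1 k <= t2 k) -> WS N t1 <= WS N t2.
Proof.
move=> h; rewrite /WS; apply: ler_sum => i _; rewrite ler_wpM2l ?qn_ge0//.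
Qed.

Definition Sd N (x y : nat -> M) := WS N (fun k => d (x k) (y k)).

Lemma Sd_bnd N x y : 0 <= Sd N x y <= B - B * q ^+ N.
Proof. apply: WS_bnd => k; rewrite dB andbT; exact: d_ge0. Qed.

Lemma Sd_mono N m x y : Sd N x y <= Sd (N + m) x y.
Proof.
rewrite /Sd WS_split lerDl mulr_ge0 ?qn_ge0//.
by have /andP[] := (@WS_bnd (fun k => d (x (N + k)%N) (y (N + k)%N)) B
  (fun k => (ltac:(rewrite dB andbT; exact: d_ge0))) m).
Qed.

Lemma Sd_tail N m x y : Sd (N + m) x y <= Sd N x y + B * q ^+ N.
Proof.
rewrite /Sd WS_split lerD2l.
have /andP[_ h] := (@WS_bnd (fun k => d (x (N + k)%N) (y (N + k)%N)) B
  (fun k => (ltac:(rewrite dB andbT; exact: d_ge0))) m).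
rewrite mulrC ler_wpM2r ?qn_ge0//.
have : 0 <= B * q ^+ m by rewrite mulr_ge0 ?qn_ge0.
lra.
Qed.

Lemma D_approx x y N : Sd N x y <= dOmega d x y <= Sd N x y + B * q ^+ N.
Proof.
have hmono : {homo (fun n => Sd n x y) : n m / (n <= m)%N >-> n <= m}.
  by move=> n m /subnK <-; rewrite addnC; exact: Sd_mono.
have hub : has_ubound (range (fun n => Sd n x y)).
  exists B => _ [n _ <-]; have /andP[_ h] := Sd_bnd n x y.
  have : 0 <= B * q ^+ n by rewrite mulr_ge0 ?qn_ge0.
  lra.
have cv := nondecreasing_cvgn hmono hub.
have -> : dOmega d x y = sup (range (fun n => Sd n x y)).
  exact: (cvg_lim (@Rhausdorff R) cv).
apply/andP; split.
  by apply: ub_le_sup => //; exists N.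
apply: ge_sup; first by exists (Sd 0 x y), 0%N.
move=> _ [n _ <-].
have [nN|Nn] := leqP n N.
  have := hmono _ _ nN; have : 0 <= B * q ^+ N by rewrite mulr_ge0 ?qn_ge0.
  simpl; lra.
by rewrite -(subnKC (ltnW Nn)); exact: Sd_tail.
Qed.


Local Notation D := (dOmega d).

Lemma D_ge0 x y : 0 <= D x y.
Proof.
have /andP[h _] := D_approx x y 0.
by apply: le_trans h; rewrite /Sd /WS big_ord0.
Qed.

Lemma D_le x y : D x y <= B.
Proof.
have /andP[_ h] := D_approx x y 0; apply: (le_trans h).
by rewrite /Sd /WS big_ord0 expr0 mulr1 add0r.
Qed.

Lemma D_sym x y : D x y = D y x.
Proof.
apply: (@approx_eq _ _ _ B) => N.
have /andP[a b] := D_approx x y N; have /andP[c e] := D_approx y x N.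
have E : Sd N y x = Sd N x y.
  by rewrite /Sd /WS; apply: eq_bigr => i _; rewrite (d_sym dm).
rewrite E in c e; rewrite ler_norml; apply/andP; split; lra.
Qed.

Lemma D_tri x y z : D x z <= D x y + D y z.
Proof.
apply: (@approx_le _ _ _ B) => N.
have /andP[a b] := D_approx x z N.
have /andP[c _] := D_approx x y N; have /andP[e _] := D_approx y z N.
have : Sd N x z <= Sd N x y + Sd N y z.
  rewrite /Sd /WS -big_split /=; apply: ler_sum => i _.
  rewrite -mulrDr ler_wpM2l ?qn_ge0//; exact: (d_tri dm).
lra.
Qed.

Lemma D_xx x : D x x = 0.
Proof.
apply: (@approx_eq _ _ _ B) => N.
have /andP[a b] := D_approx x x N.
have E : Sd N x x = 0.
  by rewrite /Sd /WS big1 // => i _; rewrite (d_xx dm) mulr0.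
rewrite E in a b; have := D_ge0 x x; rewrite subr0 => h; rewrite ger0_norm //; lra.
Qed.

Lemma D_cons a b x y : D (scons a x) (scons b y) = d a b / 2 + D x y / 2.
Proof.
apply: (@approx_eq _ _ _ (2 * B)) => N.
have /andP[u v] := D_approx (scons a x) (scons b y) N.+1.
have /andP[w z] := D_approx x y N.
have E : Sd N.+1 (scons a x) (scons b y) = d a b / 2 + Sd N x y / 2.
  by rewrite /Sd WS_cons /= !(mulrC q).
rewrite E in u v.
have e : q ^+ N.+1 = q ^+ N / 2 by rewrite exprS mulrC.
move: v z; rewrite e; set Q := q ^+ N => v z.
have : 0 <= B * Q by rewrite mulr_ge0 ?qn_ge0.
rewrite ler_norml; move=> h; apply/andP; split; nra.
Qed.

Lemma D_first x y : d (x 0%N) (y 0%N) / 2 <= D x y.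
Proof.
have /andP[h _] := D_approx x y 1.
apply: le_trans h; rewrite /Sd WS_cons /WS big_ord0 mulr0 addr0 mulrC.
by [].
Qed.

Lemma D_shift (x y : nat -> M) : D (Defs.shift x) (Defs.shift y) <= 2 * D x y.
Proof.
have -> : D x y = D (scons (x 0%N) (Defs.shift x)) (scons (y 0%N) (Defs.shift y)).
  by congr D; apply/funext => -[].
rewrite D_cons; have := d_ge0 dm (x 0%N) (y 0%N); lra.
Qed.

End Omega.
Section Compact.
Context {R : realType} {M : pointedType} {d : M -> M -> R}.
Hypothesis dm : is_metric d.
Hypothesis dc : d_compact d.
Context {B : R}.
Hypothesis B0 : 0 <= B.
Hypothesis dB : forall a b, d a b <= B.
Local Notation D := (dOmega d).
Local Notation q := ((2:R)^-1).

Lemma WS_cst N (c : R) : 0 <= c -> WS N (fun _ => c) <= c.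
Proof.
move=> c0; have /andP[_ h] := @WS_bnd R (fun _ => c) c (fun k => ltac:(by rewrite c0 lexx)) N.
apply: le_trans h _; rewrite lerBlDr lerDl mulr_ge0 ?qn_ge0//.
Qed.

Lemma D_coord (u : nat -> nat -> M) (l : nat -> M) :
  (forall k, (fun n => d (u n k) (l k)) @ \oo --> 0) ->
  (fun n => D (u n) l) @ \oo --> 0.
Proof.
move=> H; apply/cvg_epsN => e e0.
have e20 : 0 < e / 2 by rewrite divr_gt0.
have [N HN] := @geo_small R B (e / 2) e20.
have fin : forall K, exists M0, forall n, (M0 <= n)%N ->
    forall k, (k < K)%N -> d (u n k) (l k) < e / 2.
  elim=> [|K [M0 HM]]; first by exists 0%N.
  have [M1 HM1] := (cvg_epsN _ _).1 (H K) (e / 2) e20.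
  exists (maxn M0 M1) => n hn k; rewrite ltnS leq_eqVlt => /orP[/eqP->|hk].
    have := HM1 n (leq_trans (leq_maxr _ _) hn).
    by rewrite subr0 ger0_norm ?(d_ge0 dm).
  exact: HM n (leq_trans (leq_maxl _ _) hn) k hk.
have [M0 HM] := fin N; exists M0 => n hn.
rewrite subr0 ger0_norm ?(D_ge0 dm B0 dB)//.
have /andP[_ b] := D_approx dm B0 dB (u n) l N.
have : Sd (d:=d) N (u n) l <= WS N (fun _ => e / 2).
  rewrite /Sd /WS /=.
  apply: ler_sum => i _; rewrite ler_wpM2l ?qn_ge0//.
  exact/ltW/HM.
have := @WS_cst N (e / 2) (ltW e20); lra.
Qed.

Lemma Omega_compact (u : nat -> (nat -> M)) : exists (phi : nat -> nat) l,
  (forall n, (phi n < phi n.+1)%N) /\ (fun n => D (u (phi n)) l) @ \oo --> 0.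
Proof.
have H : forall v : nat -> M, exists pl : (nat -> nat) * M,
    (forall n, (pl.1 n < pl.1 n.+1)%N) /\ (fun n => d (v (pl.1 n)) pl.2) @ \oo --> 0.
  by move=> v; have [phi [l [h1 h2]]] := dc v; exists (phi, l).
have [C HC] := choice H.
pose ext := fix ext (k : nat) : nat -> nat :=
  if k is k'.+1 then (fun n => ext k' ((C (fun m => u (ext k' m) k')).1 n)) else id.
pose psi k := (C (fun m => u (ext k m) k)).1.
pose l k := (C (fun m => u (ext k m) k)).2.
have extS k n : ext k.+1 n = ext k (psi k n) by [].
have P1 k : forall n, (psi k n < psi k n.+1)%N by case: (HC (fun m => u (ext k m) k)).
have P2 k : (fun n => d (u (ext k.+1 n) k) (l k)) @ \oo --> 0.
  by case: (HC (fun m => u (ext k m) k)).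
have P3 k : forall n, (ext k n < ext k n.+1)%N.
  elim: k => [//|k IH] n; rewrite !extS; apply: incr_mono => //; exact: P1.
have P4 k j : exists rho : nat -> nat, (forall m, (m <= rho m)%N) /\
    forall m, ext (k + j)%N m = ext k (rho m).
  elim: j => [|j [rho [r1 r2]]]; first by exists id; rewrite addn0.
  exists (fun m => rho (psi (k + j)%N m)); split.
    by move=> m; exact: leq_trans (@incr_ge _ (P1 (k + j)%N) m) (r1 _).
  by move=> m; rewrite addnS extS r2.
exists (fun n => ext n n), l; split.
  move=> n; rewrite extS; apply: incr_mono => //.
  exact: leq_ltn_trans (@incr_ge _ (P1 n) n) (P1 n n).
apply: D_coord => k; apply/cvg_epsN => e e0.
have [N HN] := (cvg_epsN _ _).1 (P2 k) e e0.
exists (maxn N k.+1) => n hn.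
have [rho [r1 r2]] := P4 k.+1 (n - k.+1)%N.
have := r2 n; rewrite subnKC; last exact: leq_trans (leq_maxr _ _) hn.
move=> ->; apply: HN; apply: leq_trans (r1 n).
exact: leq_trans (leq_maxl _ _) hn.
Qed.

End Compact.
Lemma inv_small {R : realType} (e : R) : 0 < e ->
  exists N, forall n, (N <= n)%N -> (n.+1%:R : R)^-1 < e.
Proof.
move=> e0; have ie0 : 0 <= e^-1 by rewrite invr_ge0 ltW.
have h := archi_boundP ie0.
exists (Num.Def.archi_bound e^-1) => n hn.
rewrite invf_plt ?posrE ?ltr0n//; apply: lt_le_trans h _.
by rewrite ler_nat; apply: leq_trans hn _.
Qed.

Section Cont.
Context {R : realType} {M : pointedType} {d : M -> M -> R}.
Hypothesis dm : is_metric d.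
Hypothesis dc : d_compact d.
Context {B : R}.
Hypothesis B0 : 0 <= B.
Hypothesis dB : forall a b, d a b <= B.
Local Notation D := (dOmega d).
Local Notation C := (d_continuous D).
Local Notation Om := (nat -> M).

Lemma C_seq {g : Om -> R} {x} {u : nat -> Om} : C g ->
  (fun n => D x (u n)) @ \oo --> 0 -> (fun n => g (u n)) @ \oo --> g x.
Proof.
move=> cg /cvg_epsN cu; apply/cvg_epsN => e e0.
have [de de0 Hd] := cg x e e0.
have [N HN] := cu de de0; exists N => n hn.
rewrite distrC; apply: Hd; have := HN n hn.
by rewrite subr0 ger0_norm ?(D_ge0 dm B0 dB).
Qed.

Lemma seq_C (g : Om -> R) :
  (forall x (u : nat -> Om), (fun n => D x (u n)) @ \oo --> 0 ->
     (fun n => g (u n)) @ \oo --> g x) -> C g.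
Proof.
move=> H x e e0; apply: NNPP => hn.
have H1 : forall n : nat, exists y, D x y < (n.+1%:R)^-1 /\ e <= `|g x - g y|.
  move=> n; apply: NNPP => hy; apply: hn; exists (n.+1%:R)^-1.
    by rewrite invr_gt0 ltr0n.
  move=> y Dy; rewrite ltNge; apply/negP => ey; apply: hy; by exists y.
have [u Hu] := choice H1.
have : (fun n => D x (u n)) @ \oo --> 0.
  apply/cvg_epsN => e' e'0; have [N HN] := inv_small _ e'0; exists N => k hk.
  rewrite subr0 ger0_norm ?(D_ge0 dm B0 dB)//.
  by apply: lt_trans (HN k hk); case: (Hu k).
move/H/cvg_epsN => /(_ e e0) [N HN].
have := HN N (leqnn _); case: (Hu N) => _; rewrite distrC; lra.
Qed.

Lemma C_add {g1 g2} : C g1 -> C g2 -> C (fun z => g1 z + g2 z).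
Proof.
move=> c1 c2; apply: seq_C => x u hu.
by apply: cvgD; apply: C_seq.
Qed.

Lemma C_mul {g1 g2} : C g1 -> C g2 -> C (fun z => g1 z * g2 z).
Proof.
move=> c1 c2; apply: seq_C => x u hu.
by apply: cvgM; apply: C_seq.
Qed.

Lemma C_cst c : C (fun _ => c).
Proof. by move=> x e e0; exists 1 => // y _; rewrite subrr normr0. Qed.

Lemma C_exp {g} : C g -> C (fun z => expR (g z)).
Proof.
move=> c1; apply: seq_C => x u hu.
apply: continuous_cvg; [exact: continuous_expR|by apply: C_seq].
Qed.

Lemma C_shift {g} : C g -> C (fun z => g (Defs.shift z)).
Proof.
move=> cg x e e0; have [de de0 Hd] := cg (Defs.shift x) e e0.
exists (de / 2); first by rewrite divr_gt0.
move=> y Dy; apply: Hd; have := D_shift dm B0 dB x y; lra.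
Qed.

Lemma C_iter_shift {g} j : C g -> C (fun z => g (iter j Defs.shift z)).
Proof.
move=> cg; elim: j => [//|j IH].
suff -> : (fun z => g (iter j.+1 Defs.shift z)) =
  (fun z => g (iter j Defs.shift (Defs.shift z))) by exact: C_shift IH.
by apply/funext => z; rewrite iterSr.
Qed.

Lemma C_sum (G : nat -> Om -> R) n : (forall j, C (G j)) ->
  C (fun z => \sum_(j < n) G j z).
Proof.
move=> cG; elim: n => [|n IH].
  suff -> : (fun z => \sum_(j < 0) G j z) = (fun _ => 0) by exact: C_cst.
  by apply/funext => z; rewrite big_ord0.
suff -> : (fun z => \sum_(j < n.+1) G j z) = (fun z => \sum_(j < n) G j z + G n z).
  exact: C_add IH (cG n).
by apply/funext => z; rewrite big_ord_recr.
Qed.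

Lemma C_holder {alpha g} : 0 < alpha -> d_holder D alpha g -> C g.
Proof.
move=> a0 [K HK] x e e0.
pose a := e / (`|K| + 1).
have K1 : 0 < `|K| + 1 by rewrite ltr_pwDr.
have a0' : 0 < a by rewrite divr_gt0.
exists (a `^ alpha^-1); first exact: powR_gt0.
move=> y Dy.
have t0 : 0 <= D x y by exact: (D_ge0 dm B0 dB).
have h1 : (D x y) `^ alpha < a.
  have := @gt0_ltr_powR R alpha a0 (D x y) (a `^ alpha^-1).
  rewrite -powRrM mulVf ?gt_eqF// powRr1 ?(ltW a0')//; apply => //.
  by rewrite nnegrE powR_ge0.
apply: le_lt_trans (HK x y) _.
have h2 : K * D x y `^ alpha <= `|K| * D x y `^ alpha.
  by rewrite ler_wpM2r ?powR_ge0 ?ler_norm.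
have h3 : `|K| * D x y `^ alpha <= `|K| * a.
  by rewrite ler_wpM2l ?normr_ge0 // ltW.
have ha : a * (`|K| + 1) = e by rewrite /a divfK ?gt_eqF.
lra.
Qed.

End Cont.
Section Compact2.
Context {R : realType} {M : pointedType} {d : M -> M -> R}.
Hypothesis dm : is_metric d.
Hypothesis dc : d_compact d.
Context {B : R}.
Hypothesis B0 : 0 <= B.
Hypothesis dB : forall a b, d a b <= B.
Local Notation D := (dOmega d).
Local Notation C := (d_continuous D).
Local Notation Om := (nat -> M).

Lemma subseq_cvg {g : Om -> R} {u : nat -> Om} {phi : nat -> nat} {l} : C g ->
  (fun n => D (u (phi n)) l) @ \oo --> 0 ->
  (fun n => g (u (phi n))) @ \oo --> g l.
Proof.
move=> cg cv; apply: (C_seq dm B0 dB cg).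
suff -> : (fun n => D l (u (phi n))) = (fun n => D (u (phi n)) l) by [].
by apply/funext => n; rewrite (D_sym dm B0 dB).
Qed.

Lemma C_bounded {g} : C g -> exists K, forall x, `|g x| <= K.
Proof.
move=> cg; apply: NNPP => nb.
have H : forall n : nat, exists x, n%:R < `|g x|.
  move=> n; apply: NNPP => hn; apply: nb; exists n%:R => x.
  rewrite leNgt; apply/negP => h; apply: hn; by exists x.
have [u Hu] := choice H.
have [phi [l [phiI cv]]] := Omega_compact dm dc B0 dB u.
move/cvg_epsN: (subseq_cvg cg cv) => /(_ 1 ltr01) [N1 HN1].
have gl0 : 0 <= `|g l| + 1 by have := normr_ge0 (g l); lra.
pose K := Num.Def.archi_bound (`|g l| + 1).
pose n := maxn N1 K.
have h1 := HN1 n (leq_maxl _ _).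
have h2 := Hu (phi n).
have h4 : (K <= phi n)%N.
  by apply: (leq_trans (leq_maxr N1 K)); exact: incr_ge.
have h5 := archi_boundP gl0.
have h6 : (K%:R : R) <= (phi n)%:R by rewrite ler_nat.
have h7 := ler_dist_dist (g (u (phi n))) (g l).
rewrite -/K in h5.
have h8 := ler_norm (`|g (u (phi n))| - `|g l|).
lra.
Qed.

Lemma C_pos_inf {g} : C g -> (forall x, 0 < g x) ->
  exists m, 0 < m /\ forall x, m <= g x.
Proof.
move=> cg gpos; apply: NNPP => nb.
have H : forall n : nat, exists x, g x < (n.+1%:R)^-1.
  move=> n; apply: NNPP => hn; apply: nb; exists (n.+1%:R)^-1; split.
    by rewrite invr_gt0 ltr0n.
  move=> x; rewrite leNgt; apply/negP => h; apply: hn; by exists x.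
have [u Hu] := choice H.
have [phi [l [phiI cv]]] := Omega_compact dm dc B0 dB u.
have gl2 : 0 < g l / 2 by rewrite divr_gt0 ?gpos.
move/cvg_epsN: (subseq_cvg cg cv) => /(_ _ gl2) [N1 HN1].
have [N2 HN2] := inv_small _ gl2.
pose n := maxn N1 N2.
have h1 := HN1 n (leq_maxl _ _).
have h2 := Hu (phi n).
have h3 : (N2 <= phi n)%N.
  by apply: (leq_trans (leq_maxr N1 N2)); exact: incr_ge.
have h4 := HN2 _ h3.
have h5 := ler_norm (g l - g (u (phi n))).
rewrite distrC in h1.
have h1' : g l - g (u (phi n)) < g l / 2 by apply: le_lt_trans h5 h1.
have := lt_trans h2 h4; lra.
Qed.

Lemma C_unif {g} : C g -> forall e, 0 < e ->
  exists2 de, 0 < de & forall x y, D x y < de -> `|g x - g y| < e.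
Proof.
move=> cg e e0; apply: NNPP => nb.
have H : forall n : nat, exists w : Om * Om,
    D w.1 w.2 < (n.+1%:R)^-1 /\ e <= `|g w.1 - g w.2|.
  move=> n; apply: NNPP => hn; apply: nb; exists (n.+1%:R)^-1.
    by rewrite invr_gt0 ltr0n.
  move=> x y Dxy; rewrite ltNge; apply/negP => h; apply: hn; by exists (x, y).
have [w Hw] := choice H.
have [phi [l [phiI cv]]] := Omega_compact dm dc B0 dB (fun n => (w n).1).
have cv2 : (fun n => D ((w (phi n)).2) l) @ \oo --> 0.
  apply/cvg_epsN => e' e'0.
  have e2 : 0 < e' / 2 by rewrite divr_gt0.
  have [N1 HN1] := (cvg_epsN _ _).1 cv _ e2.
  have [N2 HN2] := inv_small _ e2.
  exists (maxn N1 N2) => n hn.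
  have h1 := HN1 n (leq_trans (leq_maxl _ _) hn).
  have h3 : (N2 <= phi n)%N.
    apply: (leq_trans (leq_maxr N1 N2)); apply: leq_trans hn _; exact: incr_ge.
  have h4 := HN2 _ h3.
  have h5 := (Hw (phi n)).1.
  have h6 := D_tri dm B0 dB ((w (phi n)).2) ((w (phi n)).1) l.
  rewrite (D_sym dm B0 dB ((w (phi n)).2) ((w (phi n)).1)) in h6.
  have h7 := D_ge0 dm B0 dB ((w (phi n)).2) l.
  have h8 := D_ge0 dm B0 dB ((w (phi n)).1) l.
  move: h1; rewrite /= !subr0 !ger0_norm //= => h1.
  apply: le_lt_trans h6 _; rewrite [e']splitr; apply: ltrD => //.
  exact: lt_trans h5 h4.
have e2 : 0 < e / 2 by rewrite divr_gt0.
have [N1 HN1] := (cvg_epsN _ _).1 (subseq_cvg (u := fun n => (w n).1) cg cv) _ e2.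
have [N2 HN2] := (cvg_epsN _ _).1 (subseq_cvg (u := fun n => (w n).2) cg cv2) _ e2.
pose n := maxn N1 N2.
have h1 := HN1 n (leq_maxl _ _).
have h2 := HN2 n (leq_maxr _ _).
have h3 := (Hw (phi n)).2.
have h4 : `|g (w (phi n)).1 - g (w (phi n)).2| <=
    `|g (w (phi n)).1 - g l| + `|g (w (phi n)).2 - g l|.
  by rewrite (distrC (g (w (phi n)).2)); exact: ler_distD.
simpl in h1, h2; lra.
Qed.

Lemma C_slice {g} x : C g -> d_continuous d (fun a => g (scons a x)).
Proof.
move=> cg a e e0; have [de de0 Hd] := cg (scons a x) e e0.
exists (2 * de); first by rewrite mulr_gt0.
move=> b dab; apply: Hd.
rewrite (D_cons dm B0 dB) (D_xx dm B0 dB); lra.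
Qed.

End Compact2.
Section Ruelle.
Context {R : realType} {M : pointedType} {d : M -> M -> R}.
Hypothesis dm : is_metric d.
Hypothesis dc : d_compact d.
Context {B : R}.
Hypothesis B0 : 0 <= B.
Hypothesis dB : forall a b, d a b <= B.
Variable mu : probability (BorelM d) R.
Variable f : (nat -> M) -> R.
Local Notation D := (dOmega d).
Local Notation C := (d_continuous D).
Local Notation Om := (nat -> M).
Hypothesis cf : C f.

Lemma cont_meas (h : M -> R) : d_continuous d h ->
  measurable_fun (setT : set (BorelM d)) h.
Proof.
move=> ch mT; apply: (measurability _ (measurable_realfun.RGenOInfty.measurableE R)) => //.
move=> _ [_ [x ->] <-]; apply: measurableI => //.
apply: sub_sigma_algebra => a /=; rewrite in_itv /= andbT => ha.
have e0 : 0 < h a - x by rewrite subr_gt0.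
have [de de0 Hd] := ch a _ e0; exists de => // b dab.
rewrite /= in_itv /= andbT; have := Hd b dab.
have := ler_norm (h a - h b); lra.
Qed.

Lemma slice_int {G : Om -> R} x : C G ->
  mu.-integrable setT (EFin \o (fun a => G (scons a x))).
Proof.
move=> cG.
have mu1 : (mu [set: BorelM d] < +oo)%E by rewrite probability_setT ltry.
apply: measurable_bounded_integrable => //.
- apply: cont_meas; exact: (C_slice dm B0 dB x cG).
- have [K HK] := C_bounded dm dc B0 dB cG.
  exists K; split; first exact: num_real.
  move=> K' KK' a _ /=; apply: le_trans (HK _) (ltW KK').
Qed.

Definition EF (g : Om -> R) := fun z => expR (f z) * g z.

Lemma C_EF {g} : C g -> C (EF g).
Proof. by move=> cg; apply: (C_mul dm B0 dB) => //; exact: (C_exp dm B0 dB). Qed.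

Lemma Ruelle_E g x : Ruelle mu f g x = Rintegral mu setT (fun a => EF g (scons a x)).
Proof. by []. Qed.

Lemma Ruelle_D g1 g2 : C g1 -> C g2 ->
  Ruelle mu f (fun z => g1 z + g2 z) = fun x => Ruelle mu f g1 x + Ruelle mu f g2 x.
Proof.
move=> c1 c2; apply/funext => x; rewrite !Ruelle_E -RintegralD //.
- by apply: eq_Rintegral => a _; rewrite /EF mulrDr.
- exact/slice_int/C_EF.
- exact/slice_int/C_EF.
Qed.

Lemma Ruelle_Z c g : C g ->
  Ruelle mu f (fun z => c * g z) = fun x => c * Ruelle mu f g x.
Proof.
move=> cg; apply/funext => x; rewrite !Ruelle_E -RintegralZl //.
- by apply: eq_Rintegral => a _; rewrite /EF mulrCA.
- exact/slice_int/C_EF.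
Qed.

Lemma Ruelle_le g1 g2 : C g1 -> C g2 -> (forall z, g1 z <= g2 z) ->
  forall x, Ruelle mu f g1 x <= Ruelle mu f g2 x.
Proof.
move=> c1 c2 h x; rewrite !Ruelle_E; apply: le_Rintegral => //.
- exact/slice_int/C_EF.
- exact/slice_int/C_EF.
- move=> a _; rewrite /EF; apply: ler_wpM2l; [exact/ltW/expR_gt0|exact: h].
Qed.

Lemma Ruelle_pull (psi : Om -> R) g : C g ->
  Ruelle mu f (fun z => psi (Defs.shift z) * g z) = fun x => psi x * Ruelle mu f g x.
Proof.
move=> cg; apply/funext => x; rewrite !Ruelle_E -RintegralZl //.
- by apply: eq_Rintegral => a _; rewrite /EF mulrCA.
- exact/slice_int/C_EF.
Qed.

Lemma Ruelle_C g : C g -> C (Ruelle mu f g).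
Proof.
move=> cg x e e0.
have e2 : 0 < e / 2 by rewrite divr_gt0.
have [de de0 Hd] := C_unif dm dc B0 dB (C_EF cg) _ e2.
exists (2 * de); first by rewrite mulr_gt0.
move=> y Dxy.
have key : forall a, D (scons a x) (scons a y) < de.
  by move=> a; rewrite (D_cons dm B0 dB) (d_xx dm); lra.
have i1 := slice_int x (C_EF cg).
have i2 := slice_int y (C_EF cg).
have cc := C_cst (d := d) (e / 2).
have i3 := slice_int x (C_add dm B0 dB (C_EF cg) cc).
have i4 := slice_int y (C_add dm B0 dB (C_EF cg) cc).
have cst : Rintegral mu setT (fun _ : BorelM d => e / 2) = e / 2.
  have h : fine (mu [set: BorelM d]) = 1 by rewrite probability_setT.
  rewrite Rintegral_cst //.
  by rewrite h mulr1.
have i5 := slice_int x cc.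
have h1 : Ruelle mu f g x <= Ruelle mu f g y + e / 2.
  rewrite !Ruelle_E -cst -RintegralD //; try exact: i5.
  apply: le_Rintegral => // a _.
  have := Hd _ _ (key a); have := ler_norm (EF g (scons a x) - EF g (scons a y)); lra.
have h2 : Ruelle mu f g y <= Ruelle mu f g x + e / 2.
  rewrite !Ruelle_E -cst -RintegralD //; try exact: i5.
  apply: le_Rintegral => // a _.
  have := Hd _ _ (key a).
  have := ler_norm (- (EF g (scons a x) - EF g (scons a y))); rewrite normrN; lra.
rewrite ltr_norml; apply/andP; split; lra.
Qed.

End Ruelle.
Section Iter.
Context {R : realType} {M : pointedType} {d : M -> M -> R}.
Hypothesis dm : is_metric d.
Hypothesis dc : d_compact d.
Context {B : R}.
Hypothesis B0 : 0 <= B.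
Hypothesis dB : forall a b, d a b <= B.
Variable mu : probability (BorelM d) R.
Variable f : (nat -> M) -> R.
Local Notation D := (dOmega d).
Local Notation C := (d_continuous D).
Local Notation Om := (nat -> M).
Hypothesis cf : C f.
Local Notation L := (Ruelle mu f).

Lemma iter_C {g} n : C g -> C (iter n L g).
Proof.
move=> cg; elim: n => [//|n IH]; rewrite iterS.
exact: (Ruelle_C dm dc B0 dB mu f cf).
Qed.

Lemma iter_D {g1 g2} n : C g1 -> C g2 ->
  iter n L (fun z => g1 z + g2 z) = fun x => iter n L g1 x + iter n L g2 x.
Proof.
move=> c1 c2; elim: n => [//|n IH]; rewrite !iterS IH.
by apply: (Ruelle_D dm dc B0 dB mu f cf); exact: iter_C.
Qed.

Lemma iter_Z c {g} n : C g ->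
  iter n L (fun z => c * g z) = fun x => c * iter n L g x.
Proof.
move=> cg; elim: n => [//|n IH]; rewrite !iterS IH.
by apply: (Ruelle_Z dm dc B0 dB mu f cf); exact: iter_C.
Qed.

Lemma iter_le {g1 g2} n : C g1 -> C g2 -> (forall z, g1 z <= g2 z) ->
  forall x, iter n L g1 x <= iter n L g2 x.
Proof.
move=> c1 c2 h; elim: n => [//|n IH] x; rewrite !iterS.
by apply: (Ruelle_le dm dc B0 dB mu f cf) => //; exact: iter_C.
Qed.

Lemma iter_zero n : iter n L (fun _ => 0) = fun _ => 0.
Proof.
have c1 : C (fun _ : Om => (1 : R)) := C_cst 1.
have := iter_Z 0 n c1; rewrite (_ : (fun z : Om => 0 * 1) = fun _ => 0).
  by move=> ->; apply/funext => x; rewrite mul0r.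
by apply/funext => z; rewrite mul0r.
Qed.

Lemma iter_sum (G : nat -> Om -> R) m n : (forall j, C (G j)) ->
  iter n L (fun z => \sum_(j < m) G j z) = fun x => \sum_(j < m) iter n L (G j) x.
Proof.
move=> cG; elim: m => [|m IH].
  rewrite (_ : (fun z => \sum_(j < 0) G j z) = fun _ => 0).
    by rewrite iter_zero; apply/funext => x; rewrite big_ord0.
  by apply/funext => z; rewrite big_ord0.
rewrite (_ : (fun z => \sum_(j < m.+1) G j z) =
   fun z => \sum_(j < m) G j z + G m z); last first.
  by apply/funext => z; rewrite big_ord_recr.
rewrite iter_D ?IH; last exact: cG.
  by apply/funext => x; rewrite big_ord_recr.
exact: (C_sum dm B0 dB).
Qed.

Lemma iter_pull (psi : Om -> R) k : forall g, C g ->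
  iter k L (fun z => psi (iter k Defs.shift z) * g z) = fun x => psi x * iter k L g x.
Proof.
elim: k => [//|k IH] g cg.
rewrite iterSr.
rewrite (_ : (fun z => psi (iter k.+1 Defs.shift z) * g z) =
   fun z => psi (iter k Defs.shift (Defs.shift z)) * g z); last first.
  by apply/funext => z; rewrite iterSr.
rewrite (Ruelle_pull dm dc B0 dB mu f cf (fun w => psi (iter k Defs.shift w)) g cg).
rewrite (IH (L g) (Ruelle_C dm dc B0 dB mu f cf g cg)).
by apply/funext => x; rewrite iterSr.
Qed.

Lemma iter_Birkhoff (phi : Om -> R) n : C phi ->
  iter n L (Birkhoff n phi) = fun x =>
    \sum_(j < n) iter (n - j) L (fun z => phi z * iter j L (fun _ => 1) z) x.
Proof.
move=> cphi.
rewrite /Birkhoff (iter_sum (fun j z => phi (iter j Defs.shift z))); last first.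
  by move=> j; exact: (C_iter_shift dm B0 dB).
apply/funext => x; apply: eq_bigr => j _.
have jn : (j <= n)%N by apply: ltnW.
rewrite -{1}(subnK jn) iterD.
rewrite (_ : (fun z => phi (iter j Defs.shift z)) =
   fun z => phi (iter j Defs.shift z) * (fun _ => 1) z); last first.
  by apply/funext => z; rewrite mulr1.
by rewrite iter_pull //; exact: C_cst.
Qed.

Lemma iter_bound {g} (c : R) n : C g -> (forall z, `|g z| <= c) ->
  forall x, `|iter n L g x| <= c * iter n L (fun _ => 1) x.
Proof.
move=> cg hb x.
have c1 : C (fun _ : Om => (1 : R)) := C_cst 1.
have h1 := @iter_le g (fun z => c * 1) n cg (C_mul dm B0 dB (C_cst c) c1).
have h2 := @iter_le (fun z => (- c) * 1) g n (C_mul dm B0 dB (C_cst (- c)) c1) cg.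
rewrite !iter_Z // in h1 h2.
have k1 : forall z, g z <= c * 1.
  by move=> z; have := ler_norm (g z); have := hb z; rewrite mulr1; lra.
have k2 : forall z, - c * 1 <= g z.
  by move=> z; have := ler_norm (- g z); rewrite normrN; have := hb z; rewrite mulr1; lra.
have := h1 k1 x; have := h2 k2 x.
rewrite ler_norml mulNr => a b; apply/andP; split => //; lra.
Qed.

End Iter.
Section Sup.
Context {R : realType} {M : pointedType} {d : M -> M -> R}.
Hypothesis dm : is_metric d.
Hypothesis dc : d_compact d.
Context {B : R}.
Hypothesis B0 : 0 <= B.
Hypothesis dB : forall a b, d a b <= B.
Local Notation D := (dOmega d).
Local Notation C := (d_continuous D).
Local Notation Om := (nat -> M).

Lemma supnorm_le (g : Om -> R) (c : R) : (forall x, `|g x| <= c) ->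
  0 <= supnorm g <= c.
Proof.
move=> hg.
have hub : has_ubound [set `|g x| | x in [set: Om]].
  by exists c => _ [x _ <-].
apply/andP; split.
  apply: le_trans (normr_ge0 (g (fun _ => point))) _.
  by apply: ub_le_sup => //; exists (fun _ => point).
by apply: ge_sup; [exists `|g (fun _ => point)|, (fun _ => point)|move=> _ [x _ <-]].
Qed.

Lemma sup_bound (g : Om -> R) : C g -> forall x, `|g x| <= supnorm g.
Proof.
move=> cg x; have [K HK] := C_bounded dm dc B0 dB cg.
apply: ub_le_sup; last by exists x.
by exists K => _ [y _ <-].
Qed.

Lemma C_opp {g} : C g -> C (fun z => - g z).
Proof.
move=> cg; apply: (seq_C dm B0 dB) => x u hu.
by apply: cvgN; apply: (C_seq dm B0 dB cg).
Qed.

Lemma C_sub {g1 g2} : C g1 -> C g2 -> C (fun z => g1 z - g2 z).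
Proof. by move=> c1 c2; apply: (C_add dm B0 dB c1); exact: C_opp. Qed.

Lemma C_scal (c : R) {g} : C g -> C (fun z => c * g z).
Proof. by move=> cg; apply: (C_mul dm B0 dB) => //; exact: C_cst. Qed.

End Sup.
Section Final.
Context {R : realType} {M : pointedType} {d : M -> M -> R}.
Hypothesis dm : is_metric d.
Hypothesis dc : d_compact d.
Context {B : R}.
Hypothesis B0 : 0 <= B.
Hypothesis dB : forall a b, d a b <= B.
Variable mu : probability (BorelM d) R.
Variable f : (nat -> M) -> R.
Local Notation D := (dOmega d).
Local Notation C := (d_continuous D).
Local Notation Om := (nat -> M).
Hypothesis cf : C f.
Local Notation L := (Ruelle mu f).
Variables (lam : R) (h phi : Om -> R) (c : R) (a b : nat -> R) (Kp Ku : R).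
Hypothesis lam0 : 0 < lam.
Hypothesis ch : C h.
Hypothesis cphi : C phi.

Definition uu j x := lam ^- j * iter j L (fun _ => 1) x.

Hypothesis ha : forall j x, `|uu j x - h x| <= a j.
Hypothesis hb : forall m x,
  `|lam ^- m * iter m L (fun y => phi y * h y) x - h x * c| <= b m.
Hypothesis hp : forall z, `|phi z| <= Kp.
Hypothesis hu : forall m x, `|uu m x| <= Ku.

Lemma C_uu j : C (uu j).
Proof.
apply: (C_scal dm B0 dB); apply: (iter_C dm dc B0 dB mu f cf).
exact: C_cst.
Qed.

Lemma W_eq n j x : (j <= n)%N ->
  lam ^- n * iter (n - j) L (fun z => phi z * iter j L (fun _ => 1) z) x =
  lam ^- (n - j) * iter (n - j) L (fun z => phi z * uu j z) x.
Proof.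
move=> jn.
have lj : lam ^+ j != 0 by rewrite expf_neq0 // gt_eqF.
have lnj : lam ^+ (n - j) != 0 by rewrite expf_neq0 // gt_eqF.
rewrite (_ : (fun z => phi z * iter j L (fun _ => 1) z) =
    fun z => lam ^+ j * (phi z * uu j z)); last first.
  by apply/funext => z; rewrite /uu; field.
rewrite (iter_Z dm dc B0 dB mu f cf); last first.
  by apply: (C_mul dm B0 dB) => //; exact: C_uu.
have -> : lam ^+ n = lam ^+ (n - j) * lam ^+ j by rewrite -exprD subnK.
by field; apply/andP; split.
Qed.

Lemma W_bound n j x :
  `|lam ^- n * iter n L (fun z => phi z * uu j z) x - c * h x|
     <= b n + Kp * a j * Ku.
Proof.
have cE : C (fun z => phi z * uu j z - phi z * h z).
  by apply: (C_sub dm B0 dB); apply: (C_mul dm B0 dB) => //; exact: C_uu.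
have cA : C (fun z => phi z * h z) by apply: (C_mul dm B0 dB).
rewrite (_ : (fun z => phi z * uu j z) =
   fun z => phi z * h z + (phi z * uu j z - phi z * h z)); last first.
  by apply/funext => z; rewrite addrC subrK.
rewrite (iter_D dm dc B0 dB mu f cf) //=.
have a0 : 0 <= a j by apply: le_trans (ha j x); exact: normr_ge0.
have Kp0 : 0 <= Kp by apply: le_trans (hp x); exact: normr_ge0.
have hE : forall z, `|phi z * uu j z - phi z * h z| <= Kp * a j.
  by move=> z; rewrite -mulrBr normrM; apply: ler_pM => //; exact: normr_ge0.
have := iter_bound dm dc B0 dB mu f cf (Kp * a j) n cE hE x.
set E := iter n L _ x => hEb.
set A := iter n L (fun z => phi z * h z) x.
have hA := hb n x; rewrite -/A in hA.
have li : 0 < lam ^- n by rewrite invr_gt0 exprn_gt0.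
have hun := hu n x; rewrite /uu in hun.
set U := iter n L (fun _ => 1) x in hEb hun.
have h1 : `|lam ^- n * E| <= Kp * a j * (lam ^- n * U).
  rewrite normrM (ger0_norm (ltW li)) mulrCA.
  by rewrite ler_wpM2l // ltW.
have h2 : Kp * a j * (lam ^- n * U) <= Kp * a j * Ku.
  rewrite ler_wpM2l ?mulr_ge0 //; exact: le_trans (ler_norm _) hun.
rewrite mulrDr (_ : lam ^- n * A + lam ^- n * E - c * h x =
   (lam ^- n * A - h x * c) + lam ^- n * E); last by ring.
apply: le_trans (ler_normD _ _) _; lra.
Qed.

Lemma Sum_bound n x :
  `|lam ^- n * iter n L (Birkhoff n phi) x - n%:R * (c * h x)|
     <= \sum_(j < n) (b (n - j) + Kp * a j * Ku).
Proof.
rewrite (iter_Birkhoff dm dc B0 dB mu f cf) // mulr_sumr.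
have -> : n%:R * (c * h x) = \sum_(j < n) (c * h x).
  by rewrite sumr_const card_ord mulr_natl.
rewrite -sumrB; apply: le_trans (ler_norm_sum _ _ _) _.
apply: ler_sum => j _; rewrite W_eq; last exact: ltnW.
exact: W_bound.
Qed.


Lemma final_cvg (m0 : R) : 0 < m0 -> (forall x, m0 <= h x) ->
  a @ \oo --> 0 -> b @ \oo --> 0 ->
  (fun n => supnorm (fun x => n%:R^-1 * (iter n L (Birkhoff n phi) x
       / iter n L (fun _ => 1) x) - c)) @ \oo --> 0.
Proof.
move=> m00 hm acv bcv.
pose v k := b k.+1 + Kp * a k * Ku.
have vcv : v @ \oo --> 0.
  apply/cvg_epsN => e e0.
  have e2 : 0 < e / 2 by rewrite divr_gt0.
  have K1 : 0 < `|Kp * Ku| + 1 by rewrite ltr_pwDr.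
  have e3 : 0 < e / 2 / (`|Kp * Ku| + 1) by rewrite divr_gt0.
  have [N1 HN1] := (cvg_epsN _ _).1 bcv _ e2.
  have [N2 HN2] := (cvg_epsN _ _).1 acv _ e3.
  exists (maxn N1 N2) => k hk.
  have h1 := HN1 k.+1 (leq_trans (leq_maxl _ _) (leqW hk)).
  have h2 := HN2 k (leq_trans (leq_maxr _ _) hk).
  rewrite subr0 in h1 h2 *.
  have h3 : `|Kp * a k * Ku| <= `|Kp * Ku| * (e / 2 / (`|Kp * Ku| + 1)).

    rewrite (_ : Kp * a k * Ku = (Kp * Ku) * a k); last by ring.
    rewrite normrM ler_wpM2l ?normr_ge0 //; by move: h2; rewrite subr0 => /ltW.
  have h4 : `|Kp * Ku| * (e / 2 / (`|Kp * Ku| + 1)) <= e / 2.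
    have q : e / 2 / (`|Kp * Ku| + 1) * (`|Kp * Ku| + 1) = e / 2.
      by rewrite divfK // gt_eqF.
    lra.
  have := ler_normD (b k.+1) (Kp * a k * Ku); rewrite /v subr0; lra.
have Ecv := cesaro vcv.
apply/cvg_epsN => e e0.
have d1 : 0 < e * m0 / 4 by rewrite !mulr_gt0 // invr_gt0.
have c1 : 0 < `|c| + 1 by rewrite ltr_pwDr.
have d2 : 0 < Num.min (m0 / 2) (e * m0 / 4 / (`|c| + 1)).
  by rewrite lt_min divr_gt0 //= divr_gt0.
have [N1 HN1] := (cvg_epsN _ _).1 Ecv _ d1.
have [N2 HN2] := (cvg_epsN _ _).1 acv _ d2.
exists (maxn N1.+1 N2) => n hn.
move: hn; rewrite geq_max => /andP[hn1 hn2].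
have [m nm] : exists m, n = m.+1 by case: n hn1 {hn2} => // k _; exists k.
have hAM := HN1 m ltac:(by rewrite -ltnS -nm).
have han := HN2 n hn2.
move: hAM han; rewrite !subr0 => hAM han.
set AM := arithmetic_mean v m in hAM.
move: han; rewrite lt_min => /andP[ha1 ha2].
subst n.
have AM_eq : \sum_(j < m.+1) (b (m.+1 - j) + Kp * a j * Ku) = m.+1%:R * AM.
  rewrite /AM /arithmetic_mean /series /= mulVKf ?pnatr_eq0 // big_mkord.
  rewrite /v big_split /= [RHS]big_split /=; congr (_ + _).
  rewrite (reindex_inj rev_ord_inj) /=; apply: eq_bigr => j _.
  by rewrite subKn.
set X := `|AM| + `|c| * `|a m.+1|.
have X0 : 0 <= X by rewrite addr_ge0 ?mulr_ge0.
set r := X * 2 / m0.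
have hr : r < e.
  rewrite /r ltr_pdivrMr //.
  have q : e * m0 / 4 / (`|c| + 1) * (`|c| + 1) = e * m0 / 4 by rewrite divfK // gt_eqF.
  have h5 : `|c| * `|a m.+1| <= `|c| * (e * m0 / 4 / (`|c| + 1)).
    by rewrite ler_wpM2l //; exact: ltW ha2.
  have h6 : 0 <= e * m0 / 4 / (`|c| + 1) by rewrite ltW // divr_gt0.
  rewrite /X; lra.
suff pw : forall x, `|m.+1%:R^-1 * (iter m.+1 L (Birkhoff m.+1 phi) x
     / iter m.+1 L (fun _ => 1) x) - c| <= r.
  have := supnorm_le _ _ pw; move=> /andP[s0 s1].
  rewrite ger0_norm //; lra.
move=> x.
set n := m.+1.
set S := iter n L (Birkhoff n phi) x.
set O := iter n L (fun _ => 1) x.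
have hs := Sum_bound n x; rewrite AM_eq -/S in hs.
have hU := ha n x; rewrite /uu -/O in hU.
have hx := hm x.
have lnz : lam ^+ n != 0 by rewrite expf_neq0 // gt_eqF.
have nz : (n%:R : R) != 0 by rewrite pnatr_eq0.
have n0 : (0 : R) < n%:R by rewrite ltr0n.
set U := lam ^- n * O in hU.
have an0 := ler_norm (a n).
have U0 : m0 / 2 <= U.
  have := ler_norm (h x - U); rewrite distrC in hU; lra.
have Upos : 0 < U by apply: lt_le_trans U0; rewrite divr_gt0.
have O0 : O != 0.
  apply/eqP => O0; move: Upos; rewrite /U O0 mulr0; lra.
set P := n%:R^-1 * (lam ^- n * S).
have hP : `|P - c * h x| <= `|AM|.
  have -> : P - c * h x = n%:R^-1 * (lam ^- n * S - n%:R * (c * h x)).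
    by rewrite /P mulrBr mulKf.
  have ni : 0 <= (n%:R : R)^-1 by rewrite invr_ge0 ler0n.
  rewrite normrM (ger0_norm ni) ler_pdivrMl //; apply: le_trans hs _.
  by rewrite ler_wpM2l ?ler0n // ler_norm.
have -> : n%:R^-1 * (S / O) - c = (P - c * U) / U.
  by rewrite /P /U; field; apply/and3P; split.
rewrite normrM normfV (ger0_norm (ltW Upos)) ler_pdivrMr //.
have hPU : `|P - c * U| <= `|P - c * h x| + `|c| * `|h x - U|.
  have -> : P - c * U = (P - c * h x) + c * (h x - U) by ring.
  by rewrite -normrM; apply: ler_normD.
have r0 : 0 <= r.
  by rewrite /r; apply: divr_ge0; [apply: mulr_ge0 => //|exact: ltW].
have rm : r * (m0 / 2) = X by rewrite /r; field; rewrite gt_eqF.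
have hcU : `|c| * `|h x - U| <= `|c| * `|a n|.
  by rewrite ler_wpM2l //; rewrite distrC; apply: le_trans hU an0.
have : r * (m0 / 2) <= r * U by rewrite ler_wpM2l.
rewrite /X in rm; lra.
Qed.

End Final.
Theorem mainTheorem4 (R : realType) (M : pointedType) (d : M -> M -> R)
  (mu : probability (BorelM d) R)
  (alpha : R) (f : (nat -> M) -> R)
  (lam : R) (h : (nat -> M) -> R) (nu : probability (BorelOmega d) R) :
  (* (M,d) compact metric space, mu Borel probability with full support *)
  is_metric d -> d_compact d ->
  (forall U : set M, d_open d U -> U !=set0 -> (0 < mu U)%E) ->
  (* 0 < alpha < 1, f in C^alpha(Omega) *)
  0 < alpha < 1 -> d_holder (dOmega d) alpha f ->
  (* Ruelle-Perron-Frobenius data lambda_f, h_f, nu_f *)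
  0 < lam ->
  d_continuous (dOmega d) h -> (forall x, 0 < h x) ->
  (forall x, Ruelle mu f h x = lam * h x) ->
  (forall phi : (nat -> M) -> R, d_continuous (dOmega d) phi ->
     (\int[nu]_x (Ruelle mu f phi x)%:E = lam%:E * \int[nu]_x (phi x)%:E)%E) ->
  (\int[nu]_x (h x)%:E = 1)%E ->
  (forall phi : (nat -> M) -> R, d_continuous (dOmega d) phi ->
     (fun n => supnorm (fun x : nat -> M =>
        lam ^- n * iter n (Ruelle mu f) phi x
        - h x * fine (\int[nu]_y (phi y)%:E)%E)) @ \oo --> (0 : R)) ->
  forall phi : (nat -> M) -> R, d_continuous (dOmega d) phi ->
    (fun n => supnorm (fun x : nat -> M =>
       n%:R^-1 * (iter n (Ruelle mu f) (Birkhoff n phi) x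
                  / iter n (Ruelle mu f) (fun _ => 1) x)
       - fine (\int[nu]_y (phi y * h y)%:E)%E)) @ \oo --> (0 : R).
Proof.
move=> dm dc _ /andP[al0 _] hf lam0 ch hpos _ _ _ hconv phi cphi.
have [B [B0 dB]] := d_bnd dm dc.
have cf := C_holder dm B0 dB al0 hf.
have c1 : d_continuous (dOmega d) (fun _ : nat -> M => (1 : R)) := C_cst 1.
set c := fine (\int[nu]_y (phi y * h y)%:E)%E.
have int1 : fine (\int[nu]_y ((fun _ : nat -> M => (1 : R)) y)%:E)%E = 1.
  by rewrite /= integral_cst //= probability_setT mul1e.
pose a n := supnorm (fun x : nat -> M =>
  lam ^- n * iter n (Ruelle mu f) (fun _ => 1) x
  - h x * fine (\int[nu]_y ((fun _ : nat -> M => (1 : R)) y)%:E)%E).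
have acv : a @ \oo --> 0 := hconv _ c1.
have cphih : d_continuous (dOmega d) (fun y => phi y * h y) := C_mul dm B0 dB cphi ch.
pose b m := supnorm (fun x : nat -> M =>
  lam ^- m * iter m (Ruelle mu f) (fun y => phi y * h y) x - h x * c).
have bcv : b @ \oo --> 0 := hconv _ cphih.
have ha : forall j x, `|uu mu f lam j x - h x| <= a j.
  move=> j x.
  have -> : uu mu f lam j x - h x = lam ^- j * iter j (Ruelle mu f) (fun _ => 1) x
    - h x * fine (\int[nu]_y ((fun _ : nat -> M => (1 : R)) y)%:E)%E.
    by rewrite int1 mulr1.
  apply: (sup_bound dm dc B0 dB).
  apply: (C_sub dm B0 dB); last by apply: (C_mul dm B0 dB) => //; exact: C_cst.
  apply: (C_scal dm B0 dB); apply: (iter_C dm dc B0 dB mu f cf); exact: c1.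
have hb : forall m x, `|lam ^- m * iter m (Ruelle mu f) (fun y => phi y * h y) x
     - h x * c| <= b m.
  move=> m x; apply: (sup_bound dm dc B0 dB) => //.
  apply: (C_sub dm B0 dB); last by apply: (C_mul dm B0 dB) => //; exact: C_cst.
  apply: (C_scal dm B0 dB); exact: (iter_C dm dc B0 dB mu f cf).
have [Kp hp] := C_bounded dm dc B0 dB cphi.
have [Kh hh] := C_bounded dm dc B0 dB ch.
have [m0 [m00 hm]] := C_pos_inf dm dc B0 dB ch hpos.
have [Ka hKa] : exists Ka, forall n, `|a n| <= Ka.
  have [K0 [_ HK]] := cvg_seq_bounded (cvgP _ acv).
  exists (K0 + 1) => n; apply: (HK (K0 + 1)) => //; lra.
have hu : forall m x, `|uu mu f lam m x| <= Kh + Ka.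
  move=> m x; have := ha m x; have := hh x; have := hKa m.
  have := ler_norm (a m).
  have := ler_distD (h x) (uu mu f lam m x) 0; rewrite !subr0 distrC.
  lra.
exact: (final_cvg dm dc B0 dB mu f cf lam h phi c a b Kp (Kh + Ka) lam0 ch cphi
  ha hb hp hu m0 m00 hm acv bcv).
Qed.
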